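(* Let $\alpha>0$, $\sigma_A^2\ge0$, $\eta>0$, $q>0$, let $K^*(x)=\alpha x+\tfrac13[(2x+\alpha^2)^{3/2}-\alpha^3]$ and define \[ h(x)=K^*(x)-\eta\sqrt{2x+q^2}+\eta q,\qquad x\ge0. \] Assume $\nabla h(0)\ge0$. Then $h$ is convex and increasing on $\mathbb{R}_+$. Moreover, the diffusion Bellman error \[ \mathcal{E}^D_B(x)=\min_{u\ge0}\Bigl(x+\tfrac12u^2+(-u+\alpha)\nabla h(x)+\tfrac12\sigma_A^2\nabla^2h(x)\Bigr) \] is bounded over $x\in\mathbb{R}_+$, and $|\mathcal{E}^D_B(x)-\eta|=O\bigl((1+x)^{-1/2}\bigr)$ as $x\to\infty$.
   Context: This is the diffusion approximation of the speed scaling queue $X(t+1)=X(t)-U(t)+A(t+1)$ with cost $c(x,u)=x+\tfrac12u^2$, whose i.i.d. arrivals have mean $\alpha$ and variance $\sigma_A^2$; the diffusion generator is $\mathcal{D}^D_uh(x)=(-u+\alpha)\nabla h(x)+\tfrac12\sigma_A^2\nabla^2h(x)$. *)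

(* Defs.v *)
From Stdlib Require Import Reals.
From Coquelicot Require Import Coquelicot.
Open Scope R_scope.

Definition Kstar (alpha x : R) : R :=
  alpha * x + / 3 * (Rpower (2 * x + alpha ^ 2) (3 / 2) - alpha ^ 3).

Definition hfun (alpha eta q : R) (x : R) : R :=
  Kstar alpha x - eta * sqrt (2 * x + q ^ 2) + eta * q.

Definition bellman_objective (alpha sigma2 : R) (h : R -> R) (x u : R) : R :=
  x + / 2 * u ^ 2 + (- u + alpha) * Derive h x
    + / 2 * sigma2 * Derive_n h 2 x.

Definition bellman_error (alpha sigma2 : R) (h : R -> R) (x : R) : R :=
  real (Glb_Rbar (fun y => exists u, 0 <= u /\ y = bellman_objective alpha sigma2 h x u)).

(* Main.v *)
Require Import Defs.
From Stdlib Require Import Reals Lra.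
From Coquelicot Require Import Coquelicot.
Open Scope R_scope.

Definition Dd (a e q y : R) := a + sqrt (2*y+a^2) - e / sqrt (2*y+q^2).

Lemma Rpow32_der z : 0 < z -> Derive (fun x => Rpower x (3/2)) z = 3/2 * sqrt z.
Proof.
  intros Hz. apply is_derive_unique. apply is_derive_Reals.
  replace (3/2 * sqrt z) with (3/2 * Rpower z (3/2 - 1)).
  - apply derivable_pt_lim_power; auto.
  - f_equal. replace (3/2-1) with (/2) by field. apply Rpower_sqrt; auto.
Qed.

Lemma hder a e q y : 0 < 2*y+a^2 -> 0 < 2*y+q^2 ->
  is_derive (hfun a e q) y (Dd a e q y).
Proof.
  intros H1 H2. unfold hfun, Kstar, Dd.
  auto_derive.
  - split; [|split; auto; lra]. exists (3/2 * sqrt (2 * y + a * (a * 1))).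
    apply is_derive_Reals. 
    replace (3/2 * sqrt (2 * y + a * (a * 1))) with (3/2 * Rpower (2 * y + a * (a * 1)) (3/2 - 1)).
    + apply derivable_pt_lim_power; simpl in H1; lra.
    + f_equal. replace (3/2-1) with (/2) by field. apply Rpower_sqrt; simpl in H1; lra.
  - rewrite Rpow32_der by (simpl in H1; lra).
    assert (0 < sqrt (2 * y + q * (q * 1))) by (apply sqrt_lt_R0; simpl in H2; lra).
    simpl. field. lra.
Qed.
Lemma Dh a e q y : 0 < 2*y+a^2 -> 0 < 2*y+q^2 ->
  Derive (hfun a e q) y = Dd a e q y.
Proof. intros; apply is_derive_unique, hder; auto. Qed.

Lemma D2h a e q x : 0 < a -> 0 < q -> 0 <= x ->
  Derive_n (hfun a e q) 2 x = / sqrt (2*x+a^2) + e / (sqrt (2*x+q^2))^3.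
Proof.
  intros Ha Hq Hx. simpl Derive_n.
  assert (L1 : locally x (fun t => -(a^2)/2 < t)).
  { apply (open_gt (-(a^2)/2) x). nra. }
  assert (L2 : locally x (fun t => -(q^2)/2 < t)).
  { apply (open_gt (-(q^2)/2) x). nra. }
  rewrite (Derive_ext_loc _ (Dd a e q)).
  - apply is_derive_unique. unfold Dd. auto_derive.
    + assert (0 < sqrt (2 * x + q * (q * 1))) by (apply sqrt_lt_R0; nra).
      repeat split; try nra; lra.
    + assert (0 < sqrt (2 * x + a * (a * 1))) by (apply sqrt_lt_R0; nra).
      assert (0 < sqrt (2 * x + q * (q * 1))) by (apply sqrt_lt_R0; nra).
      simpl. field. lra.
  - generalize (filter_and _ _ L1 L2). apply filter_imp. intros t [T1 T2].
    apply Dh; lra.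
Qed.

Lemma glb_min (f : R -> R) m u0 : (forall u, 0 <= u -> m <= f u) -> 0 <= u0 -> f u0 = m ->
  Glb_Rbar (fun y => exists u, 0 <= u /\ y = f u) = Finite m.
Proof.
  intros H1 H2 H3. apply is_glb_Rbar_unique. split.
  - intros y [u [Hu ->]]. simpl. apply H1; auto.
  - intros b Hb. apply Hb. exists u0. split; auto.
Qed.

Lemma bell_eq a sigma2 e q x : 0 < a -> 0 < q -> 0 <= x ->
  0 <= Dd a e q x ->
  bellman_error a sigma2 (hfun a e q) x =
  x - / 2 * (Dd a e q x)^2 + a * Dd a e q x
   + / 2 * sigma2 * (/ sqrt (2*x+a^2) + e / (sqrt (2*x+q^2))^3).
Proof.
  intros Ha Hq Hx HD. unfold bellman_error.
  erewrite glb_min. reflexivity.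
  - intros u Hu. unfold bellman_objective. rewrite Dh by nra. rewrite D2h by auto.
    set (D := Dd a e q x). assert (0 <= (u-D)*(u-D)) by apply Rle_0_sqr. nra.
  - exact HD.
  - unfold bellman_objective. rewrite Dh by nra. rewrite D2h by auto. set (D := Dd a e q x). set (SS := / 2 * sigma2 * _). field.
Qed.

Lemma D_mono a e q x y : 0 < a -> 0 < q -> 0 < e -> 0 <= x -> x <= y -> Dd a e q x <= Dd a e q y.
Proof.
  intros Ha Hq He Hx Hxy. unfold Dd.
  assert (sqrt (2*x+a^2) <= sqrt (2*y+a^2)) by (apply sqrt_le_1_alt; lra).
  assert (0 < sqrt (2*x+q^2)) by (apply sqrt_lt_R0; nra).
  assert (sqrt (2*x+q^2) <= sqrt (2*y+q^2)) by (apply sqrt_le_1_alt; lra).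
  assert (/ sqrt (2*y+q^2) <= / sqrt (2*x+q^2)) by (apply Rinv_le_contravar; lra).
  unfold Rdiv. nra.
Qed.

Lemma D_smono a e q x y : 0 < a -> 0 < q -> 0 < e -> 0 <= x -> x < y -> Dd a e q x < Dd a e q y.
Proof.
  intros Ha Hq He Hx Hxy. unfold Dd.
  assert (sqrt (2*x+a^2) < sqrt (2*y+a^2)) by (apply sqrt_lt_1_alt; nra).
  assert (0 < sqrt (2*x+q^2)) by (apply sqrt_lt_R0; nra).
  assert (sqrt (2*x+q^2) <= sqrt (2*y+q^2)) by (apply sqrt_le_1_alt; lra).
  assert (/ sqrt (2*y+q^2) <= / sqrt (2*x+q^2)) by (apply Rinv_le_contravar; lra).
  unfold Rdiv. nra.
Qed.

Lemma mvt_h a e q u v : 0 < a -> 0 < q -> 0 <= u <= v ->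
  exists c, u <= c <= v /\ hfun a e q v - hfun a e q u = Dd a e q c * (v - u).
Proof.
  intros Ha Hq Huv.
  destruct (MVT_gen (hfun a e q) u v (Dd a e q)) as [c [Hc Heq]].
  - intros c Hc. rewrite Rmin_left in Hc by lra. rewrite Rmax_right in Hc by lra.
    apply hder; nra.
  - intros c Hc. rewrite Rmin_left in Hc by lra. rewrite Rmax_right in Hc by lra.
    apply continuity_pt_filterlim. refine (ex_derive_continuous (hfun a e q) c _).
    eexists. apply hder; nra.
  - exists c. rewrite Rmin_left in Hc by lra. rewrite Rmax_right in Hc by lra. auto.
Qed.

Lemma convex_aux a e q x y t : 0 < a -> 0 < q -> 0 < e -> 0 <= x -> x <= y -> 0 <= t <= 1 ->
  hfun a e q (t * x + (1 - t) * y) <= t * hfun a e q x + (1 - t) * hfun a e q y.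
Proof.
  intros Ha Hq He Hx Hxy Ht.
  set (z := t * x + (1 - t) * y).
  assert (Hz : x <= z <= y) by (unfold z; nra).
  destruct (mvt_h a e q x z) as [c1 [Hc1 E1]]; auto; try lra.
  destruct (mvt_h a e q z y) as [c2 [Hc2 E2]]; auto; try lra.
  assert (HD : Dd a e q c1 <= Dd a e q c2) by (apply D_mono; lra).
  assert (Hzx : z - x = (1-t)*(y-x)) by (unfold z; ring).
  assert (Hyz : y - z = t*(y-x)) by (unfold z; ring).
  rewrite Hzx in E1. rewrite Hyz in E2.
  assert (0 <= t*(1-t)*(y-x)*(Dd a e q c2 - Dd a e q c1)).
  { apply Rmult_le_pos; [apply Rmult_le_pos; [apply Rmult_le_pos|]|]; lra. }
  nra.
Qed.

Lemma incr_aux a e q x y : 0 < a -> 0 < q -> 0 < e -> 0 <= Dd a e q 0 -> 0 <= x -> x < y ->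
  hfun a e q x < hfun a e q y.
Proof.
  intros Ha Hq He H0 Hx Hxy.
  set (m := (x+y)/2).
  destruct (mvt_h a e q x m) as [c1 [Hc1 E1]]; auto; try (unfold m; lra).
  destruct (mvt_h a e q m y) as [c2 [Hc2 E2]]; auto; try (unfold m; lra).
  assert (Dd a e q 0 <= Dd a e q c1) by (apply D_mono; lra).
  assert (Dd a e q 0 < Dd a e q c2) by (apply D_smono; unfold m in *; lra).
  assert (0 <= Dd a e q c1 * (m - x)) by (apply Rmult_le_pos; unfold m; lra).
  assert (0 < Dd a e q c2 * (y - m)) by (apply Rmult_lt_0_compat; unfold m; lra).
  lra.
Qed.

Definition Cst (a s2 e q : R) :=
  (e*(a+q) + e^2 * /q /2 + s2*e*(/q)^2/2) * (1 + /q) + s2/2 * (1 + /a).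

Lemma err_bound a s2 e q x : 0 < a -> 0 < q -> 0 < e -> 0 <= s2 -> 0 <= x ->
  Rabs (x - / 2 * (Dd a e q x)^2 + a * Dd a e q x
   + / 2 * s2 * (/ sqrt (2*x+a^2) + e / (sqrt (2*x+q^2))^3) - e)
  <= Cst a s2 e q * / sqrt (1+x).
Proof.
  intros Ha Hq He Hs Hx. unfold Dd, Cst.
  assert (Hs2 : sqrt (2*x+a^2) * sqrt (2*x+a^2) = 2*x+a^2) by (apply sqrt_sqrt; nra).
  assert (Hr2 : sqrt (2*x+q^2) * sqrt (2*x+q^2) = 2*x+q^2) by (apply sqrt_sqrt; nra).
  assert (Ht2 : sqrt (1+x) * sqrt (1+x) = 1+x) by (apply sqrt_sqrt; nra).
  assert (Hsp : 0 <= sqrt (2*x+a^2)) by apply sqrt_pos.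
  assert (Hrp : 0 <= sqrt (2*x+q^2)) by apply sqrt_pos.
  assert (Htp : 0 <= sqrt (1+x)) by apply sqrt_pos.
  set (s := sqrt (2*x+a^2)) in *. set (r := sqrt (2*x+q^2)) in *.
  set (t := sqrt (1+x)) in *. clearbody s r t.
  assert (Hsa : a <= s) by nra.
  assert (Hrq : q <= r) by nra.
  assert (Ht1 : 1 <= t) by nra.
  assert (Hsr : s <= r + a) by nra.
  assert (Hrs : r <= s + q) by nra.
  assert (Htr : t <= r + 1) by nra.
  assert (Hts : t <= s + 1) by nra.
  assert (Hxe : x = (s*s - a^2)/2) by lra.
  assert (Eq : x - / 2 * (a + s - e / r) ^ 2 + a * (a + s - e / r) +
     / 2 * s2 * (/ s + e / r ^ 3) - e
     = e*(s-r)*/r - e^2*(/r)^2/2 + s2/2*(/s + e*(/r)^3)).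
  { rewrite Hxe. field. lra. }
  rewrite Eq.
  set (u := / r). set (v := / s). set (w := / t). set (iq := / q). set (ia := / a).
  assert (Hu : r * u = 1) by (unfold u; field; lra).
  assert (Hv : s * v = 1) by (unfold v; field; lra).
  assert (Hw : t * w = 1) by (unfold w; field; lra).
  assert (Hiq : q * iq = 1) by (unfold iq; field; lra).
  assert (Hia : a * ia = 1) by (unfold ia; field; lra).
  assert (Hup : 0 < u) by (unfold u; apply Rinv_0_lt_compat; lra).
  assert (Hvp : 0 < v) by (unfold v; apply Rinv_0_lt_compat; lra).
  assert (Hwp : 0 < w) by (unfold w; apply Rinv_0_lt_compat; lra).
  assert (Hiqp : 0 < iq) by (unfold iq; apply Rinv_0_lt_compat; lra).
  assert (Hiap : 0 < ia) by (unfold ia; apply Rinv_0_lt_compat; lra).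
  assert (Hui : u <= iq) by nra.
  assert (Hut : u * t <= 1 + iq) by nra.
  assert (Hvt : v * t <= 1 + ia) by nra.
  assert (Hu2 : u^2 <= u * iq) by nra.
  assert (Hu3 : u^3 <= u * iq^2) by nra.
  assert (T1 : Rabs (e*(s-r)*u) <= e*(a+q)*u).
  { assert (Heu : 0 < e*u) by nra. replace (e*(s-r)*u) with ((e*u)*(s-r)) by ring.
    replace (e*(a+q)*u) with ((e*u)*(a+q)) by ring.
    apply Rabs_le. split; nra. }
  assert (B1 : Rabs (e*(s-r)*u - e^2*u^2/2 + s2/2*(v + e*u^3))
     <= (e*(a+q) + e^2 * iq/2 + s2*e*iq^2/2) * u + s2/2 * v).
  { assert (0 <= e^2*u^2/2) by nra.
    assert (e^2*u^2/2 <= e^2*iq/2*u) by nra.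
    assert (0 <= s2/2*(v + e*u^3)) by (apply Rmult_le_pos; [lra| assert (0 < u^3) by (apply pow_lt; lra); nra]).
    assert (s2/2*(v + e*u^3) <= s2/2*v + s2*e*iq^2/2*u).
    { assert (s2*e*u^3 <= s2*e*(u*iq^2)) by (apply Rmult_le_compat_l; nra). nra. }
    apply Rabs_le. split.
    - generalize (proj1 (Rabs_le_between _ _) T1). intros. nra.
    - generalize (proj1 (Rabs_le_between _ _) T1). intros. nra. }
  eapply Rle_trans; [exact B1|].
  assert (u <= (1+iq)*w).
  { replace u with ((u*t)*w) by (rewrite Rmult_assoc, Hw; ring). apply Rmult_le_compat_r; lra. }
  assert (v <= (1+ia)*w).
  { replace v with ((v*t)*w) by (rewrite Rmult_assoc, Hw; ring). apply Rmult_le_compat_r; lra. }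
  assert (0 <= e*(a+q) + e^2 * iq/2 + s2*e*iq^2/2).
  { assert (0 <= e*(a+q)) by nra. assert (0 <= e^2*iq) by (apply Rmult_le_pos; nra).
    assert (0 <= s2*e*iq^2) by (apply Rmult_le_pos; [nra| apply pow2_ge_0]). lra. }
  assert (0 <= s2/2) by lra.
  set (A := e*(a+q) + e^2 * iq/2 + s2*e*iq^2/2) in *.
  assert (A*u <= A*((1+iq)*w)) by (apply Rmult_le_compat_l; lra).
  assert (s2/2*v <= s2/2*((1+ia)*w)) by (apply Rmult_le_compat_l; lra).
  nra.
Qed.

Theorem proposition6 (alpha sigma2 eta q : R)
  (Halpha : 0 < alpha) (Hsigma : 0 <= sigma2) (Heta : 0 < eta) (Hq : 0 < q)
  (Hgrad0 : 0 <= Derive (hfun alpha eta q) 0) :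
  (* convex on R_+ *)
  (forall x y t, 0 <= x -> 0 <= y -> 0 <= t <= 1 ->
     hfun alpha eta q (t * x + (1 - t) * y)
       <= t * hfun alpha eta q x + (1 - t) * hfun alpha eta q y) /\
  (* increasing on R_+ *)
  (forall x y, 0 <= x -> x < y -> hfun alpha eta q x < hfun alpha eta q y) /\
  (* Bellman error bounded on R_+ *)
  (exists M, forall x, 0 <= x ->
     Rabs (bellman_error alpha sigma2 (hfun alpha eta q) x) <= M) /\
  (* |E(x) - eta| = O((1+x)^{-1/2}) as x -> oo *)
  (exists C X, forall x, X <= x ->
     Rabs (bellman_error alpha sigma2 (hfun alpha eta q) x - eta)
       <= C * / sqrt (1 + x)).
Proof.
  assert (H0 : 0 <= Dd alpha eta q 0).
  { rewrite <- Dh; auto; nra. }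
  assert (HD : forall x, 0 <= x -> 0 <= Dd alpha eta q x).
  { intros x Hx. eapply Rle_trans; [exact H0|]. apply D_mono; lra. }
  assert (HE : forall x, 0 <= x ->
     Rabs (bellman_error alpha sigma2 (hfun alpha eta q) x - eta)
       <= Cst alpha sigma2 eta q * / sqrt (1 + x)).
  { intros x Hx. rewrite bell_eq; auto. apply err_bound; auto. }
  split; [|split; [|split]].
  - intros x y t Hx Hy Ht. destruct (Rle_dec x y).
    + apply convex_aux; auto.
    + replace (t * x + (1 - t) * y) with ((1-t) * y + (1 - (1-t)) * x) by ring.
      replace (t * hfun alpha eta q x + (1 - t) * hfun alpha eta q y)
        with ((1-t) * hfun alpha eta q y + (1 - (1-t)) * hfun alpha eta q x) by ring.
      apply convex_aux; auto; lra.
  - intros x y Hx Hxy. apply incr_aux; auto.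
  - exists (eta + Rabs (Cst alpha sigma2 eta q)). intros x Hx.
    specialize (HE x Hx).
    assert (Ht : 1 <= sqrt (1+x)).
    { apply Rle_trans with (sqrt 1); [rewrite sqrt_1; lra | apply sqrt_le_1_alt; lra]. }
    assert (Hw : / sqrt (1+x) <= 1).
    { apply Rle_trans with (/ 1); [apply Rinv_le_contravar; lra | rewrite Rinv_1; lra]. }
    assert (Hwp : 0 < / sqrt (1+x)) by (apply Rinv_0_lt_compat; lra).
    assert (Cst alpha sigma2 eta q * / sqrt (1+x) <= Rabs (Cst alpha sigma2 eta q) * / sqrt (1+x))
      by (apply Rmult_le_compat_r; [lra| apply Rle_abs]).
    assert (Rabs (Cst alpha sigma2 eta q) * / sqrt (1+x) <= Rabs (Cst alpha sigma2 eta q) * 1)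
      by (apply Rmult_le_compat_l; [apply Rabs_pos| lra]).
    set (b := bellman_error alpha sigma2 (hfun alpha eta q) x) in *.
    replace b with ((b - eta) + eta) by ring.
    eapply Rle_trans; [apply Rabs_triang|]. rewrite (Rabs_right eta) by lra. lra.
  - exists (Cst alpha sigma2 eta q), 0. exact HE.
Qed.
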